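(* For $i\in\{0,1\}$ let $f_i:(0,\infty)\to\mathbb R$ be bounded on $(0,a]$ for every $a>0$. Assume there are constants $p_0,p_1\in(0,1)$ and functions $\eta_i:(0,\infty)\to\mathbb R$ such that for all $x>0$ and $i\in\{0,1\}$ $$f_i(x)=f_i(xp_i)+f_{1-i}(x(1-p_i))+\eta_i(x).$$ If, as $x\to\infty$, $\eta_i(x)=O(x^{1-\alpha})$ for some $\alpha>0$ and both $i$, then $f_i(x)=O(x)$ for both $i\in\{0,1\}$. *)

(* Defs.v *)
From Stdlib Require Import Reals.
Open Scope R_scope.

Definition bigO_infty (g h : R -> R) : Prop :=
  exists C M : R, forall x : R, M <= x -> Rabs (g x) <= C * Rabs (h x).

Definition locally_bounded_pos (f : R -> R) : Prop :=
  forall a : R, 0 < a -> exists B : R, forall x : R, 0 < x <= a -> Rabs (f x) <= B.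

(* Main.v *)
Require Import Defs.
From Stdlib Require Import Reals Lra.
Open Scope R_scope.

Lemma Rp_pos x b : 0 < Rpower x b.
Proof. unfold Rpower; apply exp_pos. Qed.

Lemma Rp_mul x y b : 0 < x -> 0 < y -> Rpower (x*y) b = Rpower x b * Rpower y b.
Proof. intros; unfold Rpower; rewrite ln_mult by lra; rewrite Rmult_plus_distr_l; apply exp_plus. Qed.

Lemma Rp_gt p b : 0 < p < 1 -> b < 1 -> p < Rpower p b.
Proof.
  intros Hp Hb. unfold Rpower.
  assert (Hl : ln p < 0) by (rewrite <- ln_1; apply ln_increasing; lra).
  rewrite <- (exp_ln p) at 1 by lra. apply exp_increasing. nra.
Qed.

Lemma Rp_le1 x b : 0 <= b <= 1 -> 0 < x -> Rpower x b <= 1 + x.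
Proof.
  intros Hb Hx. destruct (Rle_lt_dec x 1) as [H|H].
  - unfold Rpower. assert (ln x <= 0).
    { rewrite <- ln_1. destruct (Req_dec x 1). subst; lra. left; apply ln_increasing; lra. }
    assert (exp (b * ln x) <= exp 0).
    { destruct (Req_dec (b * ln x) 0) as [E|E]. rewrite E; lra. left; apply exp_increasing; nra. }
    rewrite exp_0 in H1. lra.
  - assert (Rpower x b <= Rpower x 1) by (apply Rle_Rpower; lra).
    rewrite Rpower_1 in H0 by lra. lra.
Qed.

Theorem lemma6p7 (f eta : bool -> R -> R) (p : bool -> R) (alpha : R) :
  (forall i, locally_bounded_pos (f i)) ->
  (forall i, 0 < p i < 1) ->
  (forall i x, 0 < x ->
     f i x = f i (x * p i) + f (negb i) (x * (1 - p i)) + eta i x) ->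
  0 < alpha ->
  (forall i, bigO_infty (eta i) (fun x => Rpower x (1 - alpha))) ->
  forall i, bigO_infty (f i) (fun x => x).
Proof.
  intros Hb Hp Hrec Ha HO.
  set (beta := Rmax (1 - alpha) 0).
  assert (Hbeta : 0 <= beta < 1 /\ 1 - alpha <= beta).
  { unfold beta; split; [split|]; [apply Rmax_r| |apply Rmax_l].
    apply Rmax_lub_lt; lra. }
  destruct (HO false) as [C0 [M0 HC0]].
  destruct (HO true) as [C1 [M1 HC1]].
  set (K := Rabs C0 + Rabs C1).
  set (M := Rmax (Rmax M0 M1) 1).
  assert (HM0 : M0 <= M) by (unfold M; eapply Rle_trans; [apply Rmax_l|apply Rmax_l]).
  assert (HM1 : M1 <= M) by (unfold M; eapply Rle_trans; [apply Rmax_r|apply Rmax_l]).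
  assert (HM : 1 <= M) by (unfold M; apply Rmax_r).
  assert (HK : forall i x, M <= x -> Rabs (eta i x) <= K * Rpower x beta).
  { intros i x Hx.
    assert (Hpw : Rpower x (1 - alpha) <= Rpower x beta) by (apply Rle_Rpower; lra).
    assert (Hpos := Rp_pos x (1 - alpha)).
    assert (Hpos' := Rp_pos x beta).
    destruct i.
    - specialize (HC1 x ltac:(lra)). rewrite (Rabs_pos_eq (Rpower _ _)) in HC1 by lra.
      assert (C1 <= Rabs C1) by apply Rle_abs.
      assert (0 <= Rabs C0) by apply Rabs_pos.
      assert (C1 * Rpower x (1 - alpha) <= Rabs C1 * Rpower x beta).
      { apply Rle_trans with (Rabs C1 * Rpower x (1 - alpha)).
        apply Rmult_le_compat_r; lra. apply Rmult_le_compat_l; [apply Rabs_pos|lra]. }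
      unfold K. nra.
    - specialize (HC0 x ltac:(lra)). rewrite (Rabs_pos_eq (Rpower _ _)) in HC0 by lra.
      assert (C0 <= Rabs C0) by apply Rle_abs.
      assert (0 <= Rabs C1) by apply Rabs_pos.
      assert (C0 * Rpower x (1 - alpha) <= Rabs C0 * Rpower x beta).
      { apply Rle_trans with (Rabs C0 * Rpower x (1 - alpha)).
        apply Rmult_le_compat_r; lra. apply Rmult_le_compat_l; [apply Rabs_pos|lra]. }
      unfold K. nra. }
  assert (HK0 : 0 <= K) by (unfold K; pose proof (Rabs_pos C0); pose proof (Rabs_pos C1); lra).
  set (c := fun i => Rpower (p i) beta + Rpower (1 - p i) beta).
  assert (Hc : forall i, 1 < c i).
  { intros i. unfold c. pose proof (Hp i).
    pose proof (Rp_gt (p i) beta ltac:(lra) ltac:(lra)).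
    pose proof (Rp_gt (1 - p i) beta ltac:(lra) ltac:(lra)). lra. }
  set (B := K / (c false - 1) + K / (c true - 1)).
  assert (HB0 : forall i, 0 <= K / (c i - 1)).
  { intros i. pose proof (Hc i). unfold Rdiv. apply Rmult_le_pos; [lra|].
    left; apply Rinv_0_lt_compat; lra. }
  assert (HBc : forall i, K <= B * (c i - 1)).
  { intros i. pose proof (Hc i). pose proof (HB0 false); pose proof (HB0 true).
    assert (E : K / (c i - 1) * (c i - 1) = K) by (field; lra).
    unfold B. destruct i; nra. }
  assert (HBpos : 0 <= B) by (unfold B; pose proof (HB0 false); pose proof (HB0 true); lra).
  set (r := Rmax (Rmax (p false) (1 - p false)) (Rmax (p true) (1 - p true))).
  set (m := Rmin (Rmin (p false) (1 - p false)) (Rmin (p true) (1 - p true))).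
  assert (Hr : forall i, p i <= r /\ 1 - p i <= r).
  { intros []; unfold r; split.
    - eapply Rle_trans; [apply Rmax_l|apply Rmax_r].
    - eapply Rle_trans; [apply Rmax_r|apply Rmax_r].
    - eapply Rle_trans; [apply Rmax_l|apply Rmax_l].
    - eapply Rle_trans; [apply Rmax_r|apply Rmax_l]. }
  assert (Hm : forall i, m <= p i /\ m <= 1 - p i).
  { intros []; unfold m; split.
    - eapply Rle_trans; [apply Rmin_r|apply Rmin_l].
    - eapply Rle_trans; [apply Rmin_r|apply Rmin_r].
    - eapply Rle_trans; [apply Rmin_l|apply Rmin_l].
    - eapply Rle_trans; [apply Rmin_l|apply Rmin_r]. }
  assert (Hr1 : r < 1).
  { unfold r. pose proof (Hp false); pose proof (Hp true).
    repeat apply Rmax_lub_lt; lra. }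
  assert (Hm0 : 0 < m).
  { unfold m. pose proof (Hp false); pose proof (Hp true).
    repeat apply Rmin_glb_lt; lra. }
  set (L := M).
  destruct (Hb false L ltac:(unfold L; lra)) as [G0 HG0].
  destruct (Hb true L ltac:(unfold L; lra)) as [G1 HG1].
  set (A := (Rabs G0 + Rabs G1 + B * (1 + L)) / (L * m)).
  assert (HLm : 0 < L * m) by (unfold L; nra).
  assert (HA : A * (L * m) = Rabs G0 + Rabs G1 + B * (1 + L)) by (unfold A; field; assert (0 < L) by (unfold L; lra); split; lra).
  set (d := (1 - r) * L).
  assert (Hd : 0 < d) by (unfold d, L; nra).
  assert (Hind : forall n : nat, forall i x, L * m <= x <= L + INR n * d ->
            Rabs (f i x) <= A * x - B * Rpower x beta).
  { induction n as [|n IH]; intros i x Hx.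
    - simpl in Hx. rewrite Rmult_0_l, Rplus_0_r in Hx.
      assert (Hx0 : 0 < x) by lra.
      assert (Hf : Rabs (f i x) <= Rabs G0 + Rabs G1).
      { pose proof (Rabs_pos G0); pose proof (Rabs_pos G1).
        destruct i.
        - specialize (HG1 x ltac:(lra)). pose proof (Rle_abs G1). lra.
        - specialize (HG0 x ltac:(lra)). pose proof (Rle_abs G0). lra. }
      assert (Hxb := Rp_le1 x beta ltac:(lra) Hx0).
      assert (A * x >= A * (L * m)).
      { assert (0 <= A). { unfold A. unfold Rdiv. apply Rmult_le_pos.
          pose proof (Rabs_pos G0); pose proof (Rabs_pos G1); nra.
          left; apply Rinv_0_lt_compat; lra. }
        nra. }
      nra.
    - rewrite S_INR in Hx.
      destruct (Rle_lt_dec x L) as [HxL|HxL].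
      + apply IH. pose proof (pos_INR n). nra.
      + assert (Hx0 : 0 < x) by (unfold L in HxL; lra).
        destruct (Hp i) as [Hp0 Hp1].
        destruct (Hr i) as [Hr0 Hr1']. destruct (Hm i) as [Hm1 Hm2].
        assert (Hxr : r * x <= L + INR n * d).
        { assert (r * x <= r * (L + (INR n + 1) * d)) by nra.
          unfold d in *. pose proof (pos_INR n). nra. }
        assert (HLmx : L * m <= x * m) by nra.
        assert (I1 := IH i (x * p i) ltac:(split; nra)).
        assert (I2 := IH (negb i) (x * (1 - p i)) ltac:(split; nra)).
        assert (He := HK i x ltac:(unfold L in HxL; lra)).
        rewrite (Hrec i x Hx0).
        rewrite (Rp_mul x (p i) beta) in I1 by lra.
        rewrite (Rp_mul x (1 - p i) beta) in I2 by lra.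
        assert (Hci := HBc i). unfold c in Hci.
        assert (Hxb := Rp_pos x beta).
        eapply Rle_trans. apply Rabs_triang.
        eapply Rle_trans. apply Rplus_le_compat_r. apply Rabs_triang.
        nra. }
  intros i. exists A, L. intros x Hx.
  assert (Hx0 : 0 < x) by (unfold L in Hx; lra).
  destruct (INR_archimed d x Hd) as [n Hn].
  assert (H := Hind n i x ltac:(pose proof (Hm false); pose proof (Hp false); assert (0<L) by (unfold L; lra); split; nra)).
  rewrite (Rabs_pos_eq x) by lra.
  pose proof (Rp_pos x beta). nra.
Qed.
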